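(* Let $n\ge1$ and let $A\in\mathbb{R}^{2^n\times 2^n}$ be a symmetric matrix with non-negative entries, represented by a dictionary data structure with $s_0\le 2^n$ data items in the following sense: there are positive reals $A_0,\dots,A_{s_0-1}$, sets $S_c(l)\subseteq[0,2^n-1]$ for $l\in[0,s_0-1]$, and for each $j\in[0,2^n-1]$ a map $l\mapsto c_j(l)\in[0,2^n-1]$ (defined for $l$ with $j\in S_c(l)$) which is injective in $l$, such that the pairs $(c_j(l),j)$ are pairwise distinct and $$A=\sum_{l=0}^{s_0-1}\sum_{j\in S_c(l)}A_l\ket{c_j(l)}\bra{j}.$$ Let $m=\lceil\log_2 s_0\rceil$. Consider registers idx ($n$ qubits, split as $n-m$ high qubits and $m$ low qubits), del1 and del0 (one qubit each) and a system register ($n$ qubits). Suppose $O_c$ is a unitary on idx$\otimes$del1$\otimes$system such that $$O_c\ket{0}^{\otimes(n-m)}\ket{l}_{\rm idx}\ket{0}_{\rm del1}\ket{j}=\begin{cases}\ket{c_j(l)}_{\rm idx}\ket{0}_{\rm del1}\ket{j}, & \text{if } j\in S_c(l)\text{ and } l\in[0,s_0-1],\\ \ket{0}^{\otimes(n-m)}\ket{l}_{\rm idx}\ket{1}_{\rm del1}\ket{j}, & \text{if } j\notin S_c(l)\text{ or } l\in[s_0,2^m-1],\end{cases}$$ and $\mathrm{PREP}$ is a unitary on the low $m$ qubits of idx with $\mathrm{PREP}\ket{0}^{\otimes m}=\frac{1}{\sqrt{\sum_{l=0}^{s_0-1}A_l}}\sum_{l=0}^{s_0-1}\sqrt{A_l}\ket{l}$.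 Let $W=O_c(\mathrm{PREP}\otimes I)$ (with $O_c$ acting trivially on del0), let $S$ be the unitary that swaps the qubits del1 and del0 and swaps the $n$-qubit registers idx and system, and let $U_A=W^\dagger S W$. Then $U_A$ is a Hermitian block encoding of $A$ with subnormalization $\sum_{l=0}^{s_0-1}A_l$, i.e. $U_A$ is unitary and Hermitian and $$\big(\bra{0}^{\otimes n}_{\rm idx}\bra{0}_{\rm del1}\bra{0}_{\rm del0}\otimes I_{2^n}\big)U_A\big(\ket{0}^{\otimes n}_{\rm idx}\ket{0}_{\rm del1}\ket{0}_{\rm del0}\otimes I_{2^n}\big)=\frac{A}{\sum_{l=0}^{s_0-1}A_l}.$$
   Context: $[a,b]=\{a,\dots,b\}$; $\ket{j}$ denotes the computational basis state of the binary representation of $j$; $I_N$ is the $N\times N$ identity. A Hermitian block encoding of a Hermitian matrix is a block encoding $U_A$ which is itself a Hermitian unitary. *)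

(* Defs.v *)
(* Complex scalars: an arbitrary numClosedFieldType C
   (e.g. algC or R[i]); positivity/nonnegativity in C means real and >0/>=0. *)
From HB Require Import structures.
From mathcomp Require Import all_boot all_order all_algebra.
Set Implicit Arguments. Unset Strict Implicit. Unset Printing Implicit Defensive.
Import Order.TTheory GRing.Theory Num.Theory.
Local Open Scope ring_scope.

Lemma pow2_gt0 (k : nat) : (0 < 2 ^ k)%N.
Proof. by rewrite expn_gt0. Qed.

Definition zero_ord (k : nat) : 'I_(2 ^ k) := Ordinal (pow2_gt0 k).
Definition lowidx (k i : nat) : 'I_(2 ^ k) :=
  Ordinal (ltn_pmod i (pow2_gt0 k)).

Definition q0 : 'I_2 := @ord0 1.
Definition q1 : 'I_2 := @ord_max 1.

(* basis labels of idx (x) del1 (x) del0 (x) system *)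
Definition Sp (n : nat) := ('I_(2 ^ n) * 'I_2 * 'I_2 * 'I_(2 ^ n))%type.
(* basis labels of idx (x) del1 (x) system *)
Definition Sp3 (n : nat) := ('I_(2 ^ n) * 'I_2 * 'I_(2 ^ n))%type.

Definition ket (C : nzRingType) (T : finType) (x : T) : 'cV[C]_#|{: T}| :=
  delta_mx (enum_rank x) 0.

Definition adj (C : numClosedFieldType) (p q : nat) (M : 'M[C]_(p, q))
  : 'M[C]_(q, p) := (map_mx Num.conj M)^T.

Definition unitary (C : numClosedFieldType) (p : nat) (U : 'M[C]_p) : Prop :=
  adj U *m U = 1%:M /\ U *m adj U = 1%:M.

Definition ext_del0 (C : nzRingType) (n : nat) (O : 'M[C]_#|{: Sp3 n}|)
  : 'M[C]_#|{: Sp n}| :=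
  \matrix_(r, s)
    let: (i, a, b, j) := (enum_val r : Sp n) in
    let: (i', a', b', j') := (enum_val s : Sp n) in
    (b == b')%:R * O (enum_rank ((i, a, j) : Sp3 n)) (enum_rank ((i', a', j') : Sp3 n)).

(* P acting on the low m qubits of idx, tensored with the identity elsewhere;
   idx value i = (high n-m qubits) * 2^m + (low m qubits) *)
Definition prep_ext (C : nzRingType) (n m : nat) (P : 'M[C]_(2 ^ m))
  : 'M[C]_#|{: Sp n}| :=
  \matrix_(r, s)
    let: (i, a, b, j) := (enum_val r : Sp n) in
    let: (i', a', b', j') := (enum_val s : Sp n) in
    [&& (i %/ 2 ^ m == i' %/ 2 ^ m)%N, a == a', b == b' & j == j']%:R
      * P (lowidx m i) (lowidx m i').

Definition swapf (n : nat) (x : Sp n) : Sp n :=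
  let: (i, a, b, j) := x in (j, b, a, i).

Definition swap_mx (C : nzRingType) (n : nat) : 'M[C]_#|{: Sp n}| :=
  \matrix_(r, s) (enum_val r == swapf (enum_val s))%:R.

Definition iso0 (C : nzRingType) (n : nat) : 'M[C]_(#|{: Sp n}|, 2 ^ n) :=
  \matrix_(r, j) (enum_val r == ((zero_ord n, q0, q0, j) : Sp n))%:R.

(* Main.v *)
Require Import Defs.
From HB Require Import structures.
From mathcomp Require Import all_boot all_order all_algebra ring.
Import Order.TTheory GRing.Theory Num.Theory Num.Def.
Local Open Scope ring_scope.
Set Implicit Arguments. Unset Strict Implicit.

Definition mxf (C : nzRingType) (T : finType) (F : T -> T -> C) : 'M[C]_#|{: T}| :=
  \matrix_(r, s) F (enum_val r) (enum_val s).
Definition vf (C : nzRingType) (T : finType) (g : T -> C) : 'cV[C]_#|{: T}| :=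
  \col_r g (enum_val r).

Lemma sum_enumv (C : nzRingType) (T : finType) (G : T -> C) :
  \sum_(t < #|{: T}|) G (enum_val t) = \sum_y G y.
Proof.
rewrite (reindex (@enum_rank T)); last by apply: onW_bij; exact: enum_rank_bij.
by apply: eq_bigr => y _; rewrite enum_rankK.
Qed.

Lemma mxf_mul (C : nzRingType) (T : finType) (F G : T -> T -> C) :
  mxf F *m mxf G = mxf (fun x z => \sum_y F x y * G y z).
Proof.
apply/matrixP => r s; rewrite !mxE.
rewrite -(sum_enumv (fun y => F (enum_val r) y * G y (enum_val s))).
by apply: eq_bigr => t _; rewrite !mxE.
Qed.

Lemma mxf_vf (C : nzRingType) (T : finType) (F : T -> T -> C) g :
  mxf F *m vf g = vf (fun x => \sum_y F x y * g y).
Proof.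
apply/matrixP => r s; rewrite !mxE.
rewrite -(sum_enumv (fun y => F (enum_val r) y * g y)).
by apply: eq_bigr => t _; rewrite !mxE.
Qed.

Lemma adj_mul (C : numClosedFieldType) p q k (M : 'M[C]_(p, q)) (N : 'M[C]_(q, k)) :
  adj (M *m N) = adj N *m adj M.
Proof. by rewrite /adj map_mxM trmx_mul. Qed.

Lemma adjK (C : numClosedFieldType) p q (M : 'M[C]_(p, q)) : adj (adj M) = M.
Proof. by apply/matrixP => i j; rewrite !mxE conjCK. Qed.

Lemma adjD (C : numClosedFieldType) p q (M N : 'M[C]_(p, q)) : adj (M + N) = adj M + adj N.
Proof. by apply/matrixP => i j; rewrite !mxE rmorphD. Qed.

Lemma adjZ (C : numClosedFieldType) p q a (M : 'M[C]_(p, q)) : adj (a *: M) = a^* *: adj M.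
Proof. by apply/matrixP => i j; rewrite !mxE rmorphM. Qed.

Lemma adj0 (C : numClosedFieldType) p q : adj (0 : 'M[C]_(p, q)) = 0.
Proof. by apply/matrixP => i j; rewrite !mxE rmorph0. Qed.

Lemma adj_sum (C : numClosedFieldType) p q (I : finType) (F : I -> 'M[C]_(p, q)) :
  adj (\sum_i F i) = \sum_i adj (F i).
Proof. by apply: (big_morph _ (@adjD C p q) (@adj0 C p q)). Qed.

Lemma adj_mxf (C : numClosedFieldType) (T : finType) (F : T -> T -> C) :
  adj (mxf F) = mxf (fun x z => (F z x)^*).
Proof. by apply/matrixP => i j; rewrite !mxE. Qed.

Lemma mxf1 (C : nzRingType) (T : finType) :
  (1%:M : 'M[C]_#|{: T}|) = mxf (fun x z => (x == z)%:R).
Proof. by apply/matrixP => i j; rewrite !mxE (inj_eq enum_val_inj). Qed.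

Lemma eq_mxf (C : nzRingType) (T : finType) (F G : T -> T -> C) :
  (forall x z, F x z = G x z) -> mxf F = mxf G.
Proof. by move=> H; apply/matrixP => i j; rewrite !mxE H. Qed.

Lemma ketE (C : nzRingType) (T : finType) (x : T) :
  ket C x = vf (fun y => (y == x)%:R).
Proof.
apply/matrixP => i j; rewrite !mxE ord1 eqxx andbT.
by rewrite -(inj_eq enum_val_inj) enum_rankK.
Qed.

Lemma sum_delta (C : nzRingType) (T : finType) (j : T) (F : T -> C) :
  \sum_i (j == i)%:R * F i = F j.
Proof.
rewrite (bigD1 j) //= eqxx mul1r big1 ?addr0 // => i /negbTE.
by rewrite eq_sym => ->; rewrite mul0r.
Qed.

Lemma sum_pair (C : nzRingType) (A B : finType) (F : A * B -> C) :
  \sum_p F p = \sum_a \sum_b F (a, b).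
Proof. by rewrite pair_bigA; apply: eq_bigr => -[]. Qed.

Lemma sum_Sp (C : nzRingType) n (F : Sp n -> C) :
  \sum_x F x = \sum_i \sum_a \sum_b \sum_j F (i, a, b, j).
Proof.
rewrite (@sum_pair C ('I_(2^n) * 'I_2 * 'I_2)%type 'I_(2^n) F).
rewrite (@sum_pair C ('I_(2^n) * 'I_2)%type 'I_2).
rewrite (@sum_pair C 'I_(2^n) 'I_2); apply: eq_bigr => i _.
apply: eq_bigr => a _; apply: eq_bigr => b _; by [].
Qed.


Definition fn (C : nzRingType) (T : finType) (O : 'M[C]_#|{: T}|) (x y : T) : C :=
  O (enum_rank x) (enum_rank y).

Lemma mxf_fn (C : nzRingType) (T : finType) (O : 'M[C]_#|{: T}|) : O = mxf (fn O).
Proof. by apply/matrixP => i j; rewrite mxE /fn !enum_valK. Qed.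

Lemma fn_mxf (C : nzRingType) (T : finType) (F : T -> T -> C) x y : fn (mxf F) x y = F x y.
Proof. by rewrite /fn mxE !enum_rankK. Qed.

Definition d3 n (x : Sp n) : Sp3 n := (x.1.1.1, x.1.1.2, x.2).

Lemma extE (C : nzRingType) n (O : 'M[C]_#|{: Sp3 n}|) :
  ext_del0 O = mxf (fun x z => (x.1.2 == z.1.2)%:R * fn O (d3 x) (d3 z)).
Proof.
apply/matrixP => r s; rewrite !mxE /fn.
by case: (enum_val r) => [[[i a] b] j]; case: (enum_val s) => [[[i' a'] b'] j'].
Qed.

Lemma sum_Sp3 (C : nzRingType) n (F : Sp3 n -> C) :
  \sum_x F x = \sum_i \sum_a \sum_j F (i, a, j).
Proof.
rewrite (@sum_pair C ('I_(2^n) * 'I_2)%type 'I_(2^n) F).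
rewrite (@sum_pair C 'I_(2^n) 'I_2); apply: eq_bigr => i _.
by apply: eq_bigr => a _.
Qed.

Lemma fn_mul (C : nzRingType) (T : finType) (A B : 'M[C]_#|{: T}|) x z :
  fn (A *m B) x z = \sum_y fn A x y * fn B y z.
Proof. by rewrite {1}(mxf_fn A) {1}(mxf_fn B) mxf_mul fn_mxf. Qed.

Lemma ext_mul (C : comNzRingType) n (A B : 'M[C]_#|{: Sp3 n}|) :
  ext_del0 A *m ext_del0 B = ext_del0 (A *m B).
Proof.
rewrite !extE mxf_mul; apply: eq_mxf => x z.
rewrite fn_mul sum_Sp3 sum_Sp mulr_sumr; apply: eq_bigr => i _.
rewrite mulr_sumr; apply: eq_bigr => a _.
rewrite exchange_big mulr_sumr; apply: eq_bigr => j _ /=.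
rewrite -(sum_delta x.1.2 (fun b => (b == z.1.2)%:R * (fn A (d3 x) (i, a, j) * fn B (i, a, j) (d3 z)))) /=.
apply: eq_bigr => b _; rewrite /d3 /=.
by rewrite -!mulrA; congr (_ * _); rewrite mulrCA.
Qed.

Lemma fn1 (C : nzRingType) (T : finType) (x y : T) : fn (1%:M : 'M[C]_#|{: T}|) x y = (x == y)%:R.
Proof. by rewrite /fn mxE (inj_eq enum_rank_inj). Qed.

Lemma fn_adj (C : numClosedFieldType) (T : finType) (O : 'M[C]_#|{: T}|) x y :
  fn (adj O) x y = (fn O y x)^*.
Proof. by rewrite /fn !mxE. Qed.

Lemma ext_adj (C : numClosedFieldType) n (O : 'M[C]_#|{: Sp3 n}|) :
  adj (ext_del0 O) = ext_del0 (adj O).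
Proof.
rewrite !extE adj_mxf; apply: eq_mxf => x z.
by rewrite rmorphM /= rmorph_nat fn_adj eq_sym.
Qed.

Lemma ext1 (C : nzRingType) n : ext_del0 (1%:M : 'M[C]_#|{: Sp3 n}|) = 1%:M.
Proof.
rewrite extE [RHS]mxf1; apply: eq_mxf => -[[[i a] b] j] [[[i' a'] b'] j'].
rewrite fn1 /d3 /= -natrM mulnb; congr (_%:R).
rewrite !xpair_eqE; by case: (b == b'); rewrite ?andbT ?andbF.
Qed.

Lemma ext_unitary (C : numClosedFieldType) n (O : 'M[C]_#|{: Sp3 n}|) :
  unitary O -> unitary (ext_del0 O).
Proof.
by case=> H1 H2; split; rewrite ext_adj ext_mul ?H1 ?H2 ext1.
Qed.


Lemma prepE (C : nzRingType) n m (P : 'M[C]_(2 ^ m)) :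
  prep_ext n P = mxf (fun x z : Sp n =>
    [&& (x.1.1.1 %/ 2 ^ m == z.1.1.1 %/ 2 ^ m)%N, x.1.1.2 == z.1.1.2,
        x.1.2 == z.1.2 & x.2 == z.2]%:R * P (lowidx m x.1.1.1) (lowidx m z.1.1.1)).
Proof.
apply/matrixP => r s; rewrite !mxE.
by case: (enum_val r) => [[[i a] b] j]; case: (enum_val s) => [[[i' a'] b'] j'].
Qed.

Lemma key_sum (C : nzRingType) n m (x : 'I_(2 ^ n)) (G : 'I_(2 ^ m) -> C) :
  (m <= n)%N ->
  \sum_(i < 2 ^ n) (x %/ 2 ^ m == i %/ 2 ^ m)%N%:R * G (lowidx m i) = \sum_(k < 2 ^ m) G k.
Proof.
move=> mn.
have e : (2 ^ n = 2 ^ (n - m) * 2 ^ m)%N by rewrite -expnD subnK.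
have p0 := pow2_gt0 m.
have hk : forall k : 'I_(2 ^ m), (x %/ 2 ^ m * 2 ^ m + k < 2 ^ n)%N.
  move=> k; move: (ltn_ord x) (ltn_ord k); move: (nat_of_ord x) (nat_of_ord k) => xv kv.
  rewrite e; set P := (2 ^ m)%N; set X := (2 ^ (n - m))%N => xl kl.
  have : (xv %/ P < X)%N by rewrite ltn_divLR.
  move=> hl; apply: (@leq_trans ((xv %/ P).+1 * P)); first by rewrite mulSn addnC ltn_add2r.
  by rewrite leq_mul2r hl orbT.
rewrite (eq_bigr (fun i : 'I_(2 ^ n) => if (x %/ 2 ^ m == i %/ 2 ^ m)%N then G (lowidx m i) else 0)); last first.
  by move=> i _; case: ifP; rewrite ?mul1r ?mul0r.
rewrite -big_mkcond /=.
rewrite (reindex_onto (fun k => Ordinal (hk k)) (lowidx m)); last first.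
  move=> i /eqP h; apply: val_inj => /=; rewrite h.
  by rewrite {3}(divn_eq i (2 ^ m)).
apply: eq_big => k.
  rewrite /= divnMDl // (divn_small (ltn_ord k)) addn0 eqxx /=.
  by apply/eqP; apply: val_inj => /=; rewrite modnMDl modn_small.
move=> _; congr (G _); apply: val_inj => /=; rewrite modnMDl modn_small //. Qed.

Lemma natand4 (C : nzRingType) (p q r s : bool) :
  ([&& p, q, r & s]%:R : C) = p%:R * q%:R * r%:R * s%:R.
Proof. by case: p; case: q; case: r; case: s; rewrite /= ?mul1r ?mul0r ?mulr0. Qed.

Lemma natand3 (C : nzRingType) (p q r : bool) :
  ([&& p, q & r]%:R : C) = p%:R * q%:R * r%:R.
Proof. by case: p; case: q; case: r; rewrite /= ?mul1r ?mul0r ?mulr0. Qed.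

Lemma sum3_delta (C : nzRingType) (T1 T2 T3 : finType) a0 b0 c0
  (H : T1 -> T2 -> T3 -> C) F :
  (forall a b c, F a b c = (a0 == a)%:R * ((b0 == b)%:R * ((c0 == c)%:R * H a b c))) ->
  \sum_a \sum_b \sum_c F a b c = H a0 b0 c0.
Proof.
move=> hF.
rewrite -(sum_delta a0 (fun a => H a b0 c0)); apply: eq_bigr => a _.
rewrite -(sum_delta b0 (fun b => H a b c0)) mulr_sumr; apply: eq_bigr => b _.
rewrite -(sum_delta c0 (fun c => H a b c)) !mulr_sumr; apply: eq_bigr => c _.
by rewrite hF.
Qed.

Lemma prep_mul (C : comNzRingType) n m (A B : 'M[C]_(2 ^ m)) : (m <= n)%N ->
  prep_ext n A *m prep_ext n B = prep_ext n (A *m B).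
Proof.
move=> mn; rewrite !prepE mxf_mul; apply: eq_mxf => x z.
rewrite sum_Sp.
set hx := (x.1.1.1 %/ 2 ^ m)%N; set hz := (z.1.1.1 %/ 2 ^ m)%N.
set Q := [&& x.1.1.2 == z.1.1.2, x.1.2 == z.1.2 & x.2 == z.2].
transitivity (\sum_(i : 'I_(2 ^ n)) (hx == i %/ 2 ^ m)%N%:R * (Q%:R * ((i %/ 2 ^ m == hz)%N%:R *
    (A (lowidx m x.1.1.1) (lowidx m i) * B (lowidx m i) (lowidx m z.1.1.1))))).
  apply: eq_bigr => i _.
  apply: (sum3_delta (H := fun a b j => (hx == i %/ 2 ^ m)%N%:R *
    ([&& a == z.1.1.2, b == z.1.2 & j == z.2]%:R * ((i %/ 2 ^ m == hz)%N%:R *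
    (A (lowidx m x.1.1.1) (lowidx m i) * B (lowidx m i) (lowidx m z.1.1.1)))))).
  by move=> a b j /=; rewrite !natand4 natand3; ring.
rewrite mxE.
case: (eqVneq hx hz) => hxz.
  rewrite -hxz /=.
  rewrite -(@key_sum C n m x.1.1.1 (fun k => A (lowidx m x.1.1.1) k * B k (lowidx m z.1.1.1)) mn).
  rewrite mulr_sumr; apply: eq_bigr => i _ /=.
  rewrite -/hx eq_sym; case: (i %/ 2 ^ m == hx)%N; rewrite /=; ring.
rewrite big1; last first.
  move=> i _; case: (eqVneq hx (i %/ 2 ^ m)%N) => [e|]; last by rewrite /= mul0r.
  by rewrite -e (negbTE hxz) /= !(mul0r, mulr0).
by rewrite mul0r.
Qed.

Lemma prep_adj (C : numClosedFieldType) n m (P : 'M[C]_(2 ^ m)) :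
  adj (prep_ext n P) = prep_ext n (adj P).
Proof.
rewrite !prepE adj_mxf; apply: eq_mxf => x z.
rewrite rmorphM /= rmorph_nat [in RHS]mxE; congr (_%:R * _).
  by rewrite eq_sym [x.1.1.2 == _]eq_sym [x.1.2 == _]eq_sym [x.2 == _]eq_sym.
by rewrite mxE.
Qed.

Lemma divmod_eq (d i j : nat) :
  ((i %/ d == j %/ d) && (i %% d == j %% d))%N = (i == j).
Proof.
apply/idP/idP; last by move/eqP->; rewrite !eqxx.
by case/andP => /eqP h1 /eqP h2; rewrite (divn_eq i d) (divn_eq j d) h1 h2.
Qed.

Lemma prep1 (C : nzRingType) n m :
  prep_ext n (1%:M : 'M[C]_(2 ^ m)) = 1%:M.
Proof.
rewrite prepE [RHS]mxf1; apply: eq_mxf => -[[[i a] b] j] [[[i' a'] b'] j'] /=.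
rewrite mxE -natrM mulnb; congr (_%:R).
rewrite !xpair_eqE -[lowidx m i == _]val_eqE -[i == i']val_eqE /= -(divmod_eq (2 ^ m) i i').
by case: (_ %/ _ == _)%N; case: (_ %% _ == _)%N; case: (a == a'); case: (b == b'); case: (j == j').
Qed.

Lemma prep_unitary (C : numClosedFieldType) n m (P : 'M[C]_(2 ^ m)) :
  (m <= n)%N -> unitary P -> unitary (prep_ext n P).
Proof.
by move=> mn [H1 H2]; split; rewrite prep_adj prep_mul // ?H1 ?H2 prep1.
Qed.


Lemma swapfK n : involutive (@swapf n).
Proof. by case=> [[[i a] b] j]. Qed.

Lemma swapE (C : nzRingType) n : swap_mx C n = mxf (fun x z => (x == swapf z)%:R).
Proof. by []. Qed.

Lemma eq_swap n (x z : Sp n) : (x == swapf z) = (swapf x == z).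
Proof.
apply/eqP/eqP => [->|<-]; by rewrite swapfK.
Qed.

Lemma swap_adj (C : numClosedFieldType) n : adj (swap_mx C n) = swap_mx C n.
Proof.
rewrite swapE adj_mxf; apply: eq_mxf => x z.
by rewrite rmorph_nat eq_swap eq_sym.
Qed.

Lemma sum_delta_r (C : nzRingType) (T : finType) (j : T) (F : T -> C) :
  \sum_i F i * (i == j)%:R = F j.
Proof.
rewrite -(sum_delta j F); apply: eq_bigr => i _.
by rewrite eq_sym; case: (j == i); rewrite ?mulr1 ?mul1r ?mulr0 ?mul0r.
Qed.

Lemma swap_sq (C : nzRingType) n : swap_mx C n *m swap_mx C n = 1%:M.
Proof.
rewrite swapE mxf_mul [RHS]mxf1; apply: eq_mxf => x z.
under eq_bigr => y _ do rewrite eq_swap.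
rewrite sum_delta eq_swap swapfK.
by [].
Qed.

Lemma eq_vf (C : nzRingType) (T : finType) (g h : T -> C) :
  (forall x, g x = h x) -> vf g = vf h.
Proof. by move=> H; apply/matrixP => i j; rewrite !mxE H. Qed.

Lemma vfE (C : nzRingType) (T : finType) (g : T -> C) x : vf g (enum_rank x) 0 = g x.
Proof. by rewrite mxE enum_rankK. Qed.

Lemma vf_inj (C : nzRingType) (T : finType) (g h : T -> C) :
  vf g = vf h -> forall x, g x = h x.
Proof. by move=> H x; rewrite -vfE H vfE. Qed.

Lemma swap_vf (C : nzRingType) n (h : Sp n -> C) :
  swap_mx C n *m vf h = vf (fun x => h (swapf x)).
Proof.
rewrite swapE mxf_vf; apply: eq_vf => x.
under eq_bigr => y _ do rewrite eq_swap.
by rewrite sum_delta.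
Qed.

Lemma adj_vf_mul (C : numClosedFieldType) (T : finType) (g h : T -> C) :
  (adj (vf g) *m vf h) 0 0 = \sum_y conjC (g y) * h y.
Proof.
rewrite mxE -(sum_enumv (fun y => conjC (g y) * h y)).
by apply: eq_bigr => t _; rewrite !mxE.
Qed.

Lemma vf_sum (C : nzRingType) (T : finType) (I : finType) (a : I -> C) (g : I -> T -> C) :
  \sum_l a l *: vf (g l) = vf (fun y => \sum_l a l * g l y).
Proof.
apply/matrixP => r s; rewrite summxE !mxE; apply: eq_bigr => l _.
by rewrite !mxE.
Qed.

Lemma ext_ket (C : nzRingType) n (O : 'M[C]_#|{: Sp3 n}|) i a j i2 a2 j2 b :
  O *m ket C ((i, a, j) : Sp3 n) = ket C ((i2, a2, j2) : Sp3 n) ->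
  ext_del0 O *m ket C ((i, a, b, j) : Sp n) = ket C ((i2, a2, b, j2) : Sp n).
Proof.
rewrite {1}(mxf_fn O) !ketE mxf_vf => /vf_inj H.
rewrite extE mxf_vf; apply: eq_vf => x.
rewrite sum_delta_r /d3 /=.
have := H (x.1.1.1, x.1.1.2, x.2); rewrite sum_delta_r => ->.
case: x => [[[i' a'] b'] j'] /=; rewrite -natrM mulnb !xpair_eqE.
by case: (b' == b); case: (i' == i2); case: (a' == a2); case: (j' == j2).
Qed.

Lemma entry_sandwich (C : numClosedFieldType) p (M : 'M[C]_p) i j :
  M i j = (adj (delta_mx i (0 : 'I_1)) *m M *m delta_mx j (0 : 'I_1)) 0 0.
Proof.
have -> : adj (delta_mx i (0 : 'I_1)) = (delta_mx (0 : 'I_1) i : 'M[C]_(1, p)).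
  by apply/matrixP => r s; rewrite !mxE rmorph_nat; congr (_%:R); rewrite andbC.
by rewrite -rowE -colE !mxE.
Qed.

Lemma iso0_col (C : nzRingType) n j :
  iso0 C n *m delta_mx j 0 = ket C ((zero_ord n, q0, q0, j) : Sp n).
Proof.
rewrite -colE ketE; apply/matrixP => r s; rewrite !mxE.
by [].
Qed.

Lemma unitary_sandwich (C : numClosedFieldType) p (W S : 'M[C]_p) :
  unitary W -> adj S = S -> S *m S = 1%:M ->
  unitary (adj W *m S *m W) /\ adj (adj W *m S *m W) = adj W *m S *m W.
Proof.
move=> [W1 W2] Sa S2.
have Ha : adj (adj W *m S *m W) = adj W *m S *m W.
  by rewrite !adj_mul adjK Sa mulmxA.
have Hsq : (adj W *m S *m W) *m (adj W *m S *m W) = 1%:M.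
  rewrite !mulmxA -(mulmxA _ W) W2 mulmx1 -(mulmxA _ S S) S2 mulmx1 W1 //.
by split => //; split; rewrite Ha.
Qed.

Unset Implicit Arguments. Set Strict Implicit.

Lemma sum_unique (C : nzRingType) k (f : 'I_k -> C) (Q : 'I_k -> bool) l0 :
  Q l0 -> (forall l, Q l -> l = l0) -> \sum_l f l * (Q l)%:R = f l0.
Proof.
move=> q0 u; rewrite (bigD1 l0) //= q0 mulr1 big1 ?addr0 // => l ne.
case q: (Q l); last by rewrite mulr0.
by move: ne; rewrite (u l q) eqxx.
Qed.
Arguments sum_unique {C k} f {Q l0}.

Theorem theorem2 (C : numClosedFieldType) (n s0 : nat)
  (A : 'M[C]_(2 ^ n)) (Acoef : nat -> C) (Sc : nat -> {set 'I_(2 ^ n)})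
  (c : 'I_(2 ^ n) -> nat -> 'I_(2 ^ n))
  (Oc : 'M[C]_#|{: Sp3 n}|) (PREP : 'M[C]_(2 ^ up_log 2 s0)) :
  (1 <= n)%N ->
  (s0 <= 2 ^ n)%N ->
  (forall l, (l < s0)%N -> 0 < Acoef l) ->
  A^T = A ->
  (forall i j, 0 <= A i j) ->
  (forall (j : 'I_(2 ^ n)) (l l' : nat), (l < s0)%N -> (l' < s0)%N ->
      j \in Sc l -> j \in Sc l' -> c j l = c j l' -> l = l') ->
  (forall (j j' : 'I_(2 ^ n)) (l l' : nat), (l < s0)%N -> (l' < s0)%N ->
      j \in Sc l -> j' \in Sc l' -> (c j l, j) = (c j' l', j') ->
      l = l' /\ j = j') ->
  A = \sum_(l < s0) \sum_(j in Sc l) Acoef l *: delta_mx (c j l) j ->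
  unitary Oc ->
  (forall i j : 'I_(2 ^ n), (i < 2 ^ up_log 2 s0)%N ->
     Oc *m ket C ((i, q0, j) : Sp3 n) =
       if (i < s0)%N && (j \in Sc i) then ket C ((c j i, q0, j) : Sp3 n)
       else ket C ((i, q1, j) : Sp3 n)) ->
  unitary PREP ->
  PREP *m delta_mx (zero_ord (up_log 2 s0)) (0 : 'I_1) =
    (sqrtC (\sum_(l < s0) Acoef l))^-1 *:
      \sum_(l < s0) sqrtC (Acoef l) *: delta_mx (lowidx (up_log 2 s0) l) (0 : 'I_1) ->
  let W := ext_del0 Oc *m prep_ext n PREP in
  let UA := adj W *m swap_mx C n *m W in
  unitary UA /\ adj UA = UA /\
  adj (iso0 C n) *m UA *m iso0 C n = (\sum_(l < s0) Acoef l)^-1 *: A.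
Proof.
move=> n1 s0n Apos AT Ann cinj cdist Adef Ou Ohyp Pu Pdef W UA.
set m := up_log 2 s0 in PREP Ohyp Pu Pdef W UA *.
have mn : (m <= n)%N by apply: up_log_min.
have s0m : (s0 <= 2 ^ m)%N by apply: up_logP.
have Wu : unitary W.
  have [E1 E2] := ext_unitary Ou; have [P1 P2] := prep_unitary mn Pu.
  split; rewrite /W adj_mul.
    by rewrite mulmxA -(mulmxA _ (adj _)) E1 mulmx1 P1.
  by rewrite mulmxA -(mulmxA _ (prep_ext _ _)) P2 mulmx1 E2.
have [UAu UAa] := unitary_sandwich Wu (swap_adj C n) (swap_sq C n).
split => //; split => //.
set N := \sum_(l < s0) Acoef l.
set a := fun l : 'I_s0 => (sqrtC N)^-1 * sqrtC (Acoef l).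
have lt2n : forall l : 'I_s0, (l < 2 ^ n)%N := fun l => leq_trans (ltn_ord l) s0n.
have lt2m : forall l : 'I_s0, (l < 2 ^ m)%N := fun l => leq_trans (ltn_ord l) s0m.
pose wl := fun l : 'I_s0 => Ordinal (lt2n l).
pose Y := fun (l : 'I_s0) (j : 'I_(2 ^ n)) =>
  if j \in Sc l then ((c j l, q0, q0, j) : Sp n) else ((wl l, q1, q0, j) : Sp n).
have Pk : forall k, PREP k (zero_ord m) =
    (sqrtC N)^-1 * \sum_(l < s0) sqrtC (Acoef l) * (k == lowidx m l)%:R.
  move=> k; have := congr1 (fun M : 'cV[C]_(2 ^ m) => M k (0 : 'I_1)) Pdef; rewrite -colE /= !mxE => ->.
  rewrite summxE; congr (_ * _); apply: eq_bigr => l _.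
  by rewrite !mxE andbT.
have Prep0 : forall j, prep_ext n PREP *m ket C ((zero_ord n, q0, q0, j) : Sp n) =
    \sum_l a l *: ket C ((wl l, q0, q0, j) : Sp n).
  move=> j; rewrite prepE ketE mxf_vf.
  rewrite (eq_bigr (fun l => a l *: vf (fun y : Sp n => (y == (wl l, q0, q0, j))%:R))); last first.
    by move=> l _; rewrite ketE.
  rewrite vf_sum; apply: eq_vf => x; rewrite sum_delta_r /=.
  have -> : lowidx m (zero_ord n) = zero_ord m by apply: val_inj; rewrite /= mod0n.
  rewrite Pk mulr_sumr mulr_sumr; apply: eq_bigr => l _.
  case: x => [[[i a'] b'] j'] /=.
  have e0 : (0 %/ 2 ^ m = l %/ 2 ^ m)%N by rewrite div0n divn_small.
  have H : [&& (i %/ 2 ^ m == 0 %/ 2 ^ m)%N, a' == q0, b' == q0 & j' == j]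
       && (lowidx m i == lowidx m l) = ((i, a', b', j') == (wl l, q0, q0, j)).
    rewrite -[lowidx m i == _]val_eqE /= e0 !xpair_eqE -[i == wl l]val_eqE /=.
    rewrite -(divmod_eq (2 ^ m) i l).
    by case: (_ %/ _ == _)%N; case: (_ %% _ == _)%N; case: (a' == q0); case: (b' == q0); case: (j' == j).
  rewrite -H /a; case: [&& _, _, _ & _]; case: (lowidx m i == lowidx m l); by rewrite /= ?mulr0 ?mul0r ?mulr1 ?mul1r ?mulrA.
have Vj : forall j, W *m (iso0 C n *m delta_mx j 0) =
    vf (fun y => \sum_l a l * (y == Y l j)%:R).
  move=> j; rewrite iso0_col /W -mulmxA Prep0 mulmx_sumr.
  rewrite (eq_bigr (fun l => a l *: vf (fun y : Sp n => (y == Y l j)%:R))); last first.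
    move=> l _; rewrite -scalemxAr -ketE; congr (_ *: _).
    have := Ohyp (wl l) j (lt2m l); rewrite /= (ltn_ord l) /= /Y.
    by case: ifP => _ H; rewrite (ext_ket q0 H).
  by rewrite vf_sum.
have ar : forall l, (a l)^* = a l.
  move=> l; apply: geC0_conj; rewrite /a mulr_ge0 // ?invr_ge0 sqrtC_ge0 //.
    by rewrite sumr_ge0 // => k _; rewrite ltW // Apos.
  by rewrite ltW // Apos.
pose Q := fun (i j : 'I_(2 ^ n)) (l : 'I_s0) => (j \in Sc l) && (c j l == i).
have Aij : forall i j, A i j = \sum_(l < s0) Acoef l * (Q i j l)%:R.
  move=> i j; rewrite Adef summxE; apply: eq_bigr => l _.
  rewrite summxE big_mkcond /=.
  transitivity (\sum_k Acoef l * (Q i k l)%:R * (k == j)%:R); last by rewrite sum_delta_r.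
  apply: eq_bigr => k _; rewrite /Q; case: (k \in Sc l); rewrite /=.
  by rewrite !mxE -mulrA -natrM mulnb [(i == _)]eq_sym [j == k]eq_sym.
  by rewrite mulr0 mul0r.
have Sw : forall (l l' : 'I_s0) i j,
    (swapf (Y l' i) == Y l j) = Q j i l' && Q i j l.
  move=> l l' i j; rewrite /Y /Q.
  case: (i \in Sc l'); case: (j \in Sc l); rewrite /= !xpair_eqE /= ?andbF ?andbT //.
  by rewrite eq_sym andbC.
apply/matrixP => i j; rewrite entry_sandwich.
have -> : adj (delta_mx i (0 : 'I_1)) *m (adj (iso0 C n) *m UA *m iso0 C n) *m delta_mx j (0 : 'I_1)
    = adj (W *m (iso0 C n *m delta_mx i (0 : 'I_1))) *m swap_mx C n *m (W *m (iso0 C n *m delta_mx j (0 : 'I_1))).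
  by rewrite /UA !adj_mul !mulmxA.
rewrite !Vj -mulmxA swap_vf adj_vf_mul mxE.
transitivity (\sum_l' \sum_l a l' * a l * (swapf (Y l' i) == Y l j)%:R).
  under eq_bigr => y _ do rewrite rmorph_sum mulr_suml.
  rewrite exchange_big; apply: eq_bigr => l' _ /=.
  under eq_bigr => y _ do rewrite rmorphM /= rmorph_nat ar eq_sym -mulrA mulrC -mulrA.
  rewrite sum_delta mulr_suml; apply: eq_bigr => l _.
  by rewrite mulrC mulrA.
have R : forall l' l, a l' * a l * (swapf (Y l' i) == Y l j)%:R
    = (a l' * (Q j i l')%:R) * (a l * (Q i j l)%:R).
  by move=> l' l; rewrite Sw; case: (Q j i l'); case: (Q i j l); rewrite /= ?mulr0 ?mul0r ?mulr1.
under eq_bigr => l' _ do under eq_bigr => l _ do rewrite R.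
rewrite -big_distrlr /= Aij.
have Aji : A j i = A i j by rewrite -{1}AT mxE.
have Apos' : forall l : 'I_s0, 0 < Acoef l by move=> l; apply: Apos.
case: (pickP (Q i j)) => [l0 q0 | none]; last first.
  have z1 : \sum_(l < s0) a l * (Q i j l)%:R = 0.
    by rewrite big1 // => l _; move: (none l); rewrite /= => ->; rewrite mulr0.
  have z2 : \sum_(l < s0) Acoef l * (Q i j l)%:R = 0.
    by rewrite big1 // => l _; move: (none l); rewrite /= => ->; rewrite mulr0.
  by rewrite z1 z2 !mulr0.
have u0 : forall l, Q i j l -> l = l0.
  move=> l; move: q0; rewrite /Q => /andP [s1 /eqP e1] /andP [s2 /eqP e2].
  apply: val_inj; have [] := cdist j j l l0 (ltn_ord l) (ltn_ord l0) s2 s1 _ => //.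
  by rewrite e1 e2.
rewrite (sum_unique (fun l => a l) q0 u0) (sum_unique (fun l => Acoef l) q0 u0).
have Aij0 : A i j = Acoef l0 by rewrite Aij (sum_unique (fun l => Acoef l) q0 u0).
case: (pickP (Q j i)) => [l1 q1' | none]; last first.
  have : A j i = 0 by rewrite Aij big1 // => l _; rewrite none mulr0.
  by rewrite Aji Aij0 => e; have := Apos' l0; rewrite e ltxx.
have u1 : forall l, Q j i l -> l = l1.
  move=> l; move: q1'; rewrite /Q => /andP [s1 /eqP e1] /andP [s2 /eqP e2].
  apply: val_inj; have [] := cdist i i l l1 (ltn_ord l) (ltn_ord l1) s2 s1 _ => //.
  by rewrite e1 e2.
have Aji1 : A j i = Acoef l1 by rewrite Aij (sum_unique (fun l => Acoef l) q1' u1).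
rewrite (sum_unique (fun l => a l) q1' u1).
have -> : a l1 = a l0 by rewrite /a -Aji1 Aji Aij0.
rewrite /a.
have -> : (sqrtC N)^-1 * sqrtC (Acoef l0) * ((sqrtC N)^-1 * sqrtC (Acoef l0))
   = ((sqrtC N) ^+ 2)^-1 * (sqrtC (Acoef l0)) ^+ 2.
  by rewrite -exprVn !expr2; ring.
by rewrite !sqrtCK.
Qed.
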